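(* Let $X\subset\mathbb{R}^n$ be finite, $\epsilon\ge0$, and $\sigma$ a degree-compatible term ordering, and run the ABM algorithm with gradient-weighted normalization (described in the context) on $(X,\epsilon,\sigma)$. Then at every point during the run: (1) no polynomial $h\in\mathrm{Span}(\mathcal{O})$ (for the current set $\mathcal{O}$) with $\|h\|_{\mathrm{gw},X}=1$ is $\epsilon$-approximately vanishing for $X$; (2) each polynomial $g=v_1b+v_2o_1+\cdots+v_{s+1}o_s$ formed in step S3 satisfies $\|g\|_{\mathrm{gw},X}=1$, has nonzero coefficient $v_1$ on $b$, and is $\sqrt{\lambda_{\min}}$-approximately vanishing for $X$, i.e. $\|g(X)\|\le\sqrt{\lambda_{\min}}$.
   Context: For $X=\{\mathbf{x}_1,\ldots,\mathbf{x}_N\}$ and a polynomial $h$, $h(X)=(h(\mathbf{x}_1),\ldots,h(\mathbf{x}_N))^\top$; $\|\cdot\|$ is the Euclidean norm. A polynomial $g$ is $\epsilon$-approximately vanishing for $X$ if $\|g(X)\|\le\epsilon$. Gradient norm: $\|g\|_{g,X}=\sqrt{\sum_{\mathbf{x}\in X}\|\nabla g(\mathbf{x})\|^2}/\sqrt{\sum_{k=1}^n\deg_k(g)^2}$, and $0$ for constant $g$. Gradient-weighted norm of $g=\sum_ic_it_i$ (distinct terms $t_i$): $\|g\|_{\mathrm{gw},X}=\sqrt{\sum_ic_i^2\|t_i\|_{g,X}^2}$; $g$ is gradient-weighted unitary if this equals $1$. $\mathrm{Span}(\cdot)$ is the real linear span. The border of a set of terms $\mathcal{O}$ is $\partial\mathcal{O}=(\bigcup_k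 x_k\mathcal{O})\setminus\mathcal{O}$. ABM algorithm with gradient-weighted normalization, input $(X,\epsilon,\sigma)$: initialize $G=\emptyset$, $\mathcal{O}=\{1\}$. For $d=1,2,\ldots$: set $L=\{b\in\partial\mathcal{O}:\deg b=d\}$; if $L=\emptyset$, output $(\mathcal{O},G)$ and stop. Otherwise repeat until $L$ is empty: (S1) take the $\sigma$-smallest $b\in L$ and remove it from $L$; (S2) with current $\mathcal{O}=\{o_1,\ldots,o_s\}$, let $M=(b(X)\ o_1(X)\ \cdots\ o_s(X))$ and $D=\mathrm{diag}(\|b\|_{\mathrm{gw},X},\|o_1\|_{\mathrm{gw},X},\ldots,\|o_s\|_{\mathrm{gw},X})$, and compute the smallest generalized eigenvalue $\lambda_{\min}$ and a corresponding generalized eigenvector $\mathbf{v}_{\min}=(v_1,\ldots,v_{s+1})^\top$ of $M^\top M\mathbf{v}=\lambda D^2\mathbf{v}$, normalized by $\mathbf{v}_{\min}^\top D^2\mathbf{v}_{\min}=1$; (S3) if $\sqrt{\lambda_{\min}}\le\epsilon$, add $g=v_1b+v_2o_1+\cdots+v_{s+1}o_s$ to $G$; otherwise add $b$ to $\mathcal{O}$. *)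

(* Defs.v *)
From HB Require Import structures.
From mathcomp Require Import all_boot all_order all_algebra.
From mathcomp Require Import reals.
From mathcomp Require Import mpoly.


Import Order.TTheory GRing.Theory Num.Theory.
Local Open Scope ring_scope.

Section ABM.
Context {R : realType} {n : nat}.

Local Notation term := 'X_{1..n}.
Local Notation poly := {mpoly R[n]}.
Local Notation point := 'rV[R]_n.

Definition coords (x : point) : 'I_n -> R := fun i => x ord0 i.

Definition evalX (X : seq point) (h : poly) : seq R := [seq h.@[coords x] | x <- X].
Definition eucl_norm (s : seq R) : R := Num.sqrt (\sum_(a <- s) a ^+ 2).

Definition approx_vanishing (X : seq point) (eps : R) (g : poly) : Prop :=
  eucl_norm (evalX X g) <= eps.

Definition degk (k : 'I_n) (g : poly) : nat := (\max_(m <- msupp g) m k)%N.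

Definition grad_sqsum (X : seq point) (g : poly) : R :=
  \sum_(x <- X) \sum_(k < n) (g^`M(k)).@[coords x] ^+ 2.

(* gradient norm ||g||_{g,X}; 0 for constant g (i.e. all deg_k g = 0) *)
Definition grad_norm (X : seq point) (g : poly) : R :=
  let den := (\sum_(k < n) (degk k g) ^ 2)%N in
  if den == 0%N then 0
  else Num.sqrt (grad_sqsum X g) / Num.sqrt (den%:R).

Definition gw_norm (X : seq point) (g : poly) : R :=
  Num.sqrt (\sum_(m <- msupp g) (g@_m) ^+ 2 * (grad_norm X 'X_[m]) ^+ 2).

Definition in_span (O : seq term) (h : poly) : Prop :=
  exists c : term -> R, h = \sum_(t <- O) c t *: 'X_[t].

(* term orderings (on monomials, multiplication of terms = addition of exponents) *)
Definition term_order (le : rel term) : Prop :=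
  [/\ reflexive le, antisymmetric le, transitive le & total le] /\
  (forall m, le 0%MM m) /\
  (forall m1 m2 m3, le m1 m2 -> le (m1 + m3)%MM (m2 + m3)%MM).

Definition degree_compatible (le : rel term) : Prop :=
  forall m1 m2, (mdeg m1 < mdeg m2)%N -> le m1 m2 && (m1 != m2).

(* {b in border(O) : deg b = d}, border(O) = (U_k x_k O) \ O *)
Definition border_deg (O : seq term) (d : nat) : seq term :=
  undup [seq m <- [seq (U_(k) + o)%MM | k <- enum 'I_n, o <- O]
         | (mdeg m == d) && (m \notin O)].

Definition sigma_min (le : rel term) (L : seq term) (b : term) : Prop :=
  b \in L /\ forall t, t \in L -> le b t.

Definition cols (b : term) (O : seq term) (j : nat) : term :=
  nth 0%MM (b :: O) j.

Definition Mmat (X : seq point) (b : term) (O : seq term) : 'M[R]_(size X, (size O).+1) :=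
  \matrix_(i < size X, j < (size O).+1) ('X_[cols b O j] : poly).@[coords (nth 0 X i)].

Definition Dmat (X : seq point) (b : term) (O : seq term) : 'M[R]_((size O).+1) :=
  diag_mx (\row_(j < (size O).+1) gw_norm X 'X_[cols b O j]).

Definition gen_eigpair (X : seq point) (b : term) (O : seq term)
    (lam : R) (v : 'cV[R]_((size O).+1)) : Prop :=
  let M := Mmat X b O in let D := Dmat X b O in
  ((M^T *m M) *m v = lam *: ((D *m D) *m v)) /\ (v^T *m (D *m D) *m v = 1%:M).

Definition S2_result (X : seq point) (b : term) (O : seq term)
    (lam : R) (v : 'cV[R]_((size O).+1)) : Prop :=
  gen_eigpair X b O lam v /\
  forall mu (w : 'cV[R]_((size O).+1)), gen_eigpair X b O mu w -> lam <= mu.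

Definition S3_poly (b : term) (O : seq term) (v : 'cV[R]_((size O).+1)) : poly :=
  \sum_(j < (size O).+1) v j ord0 *: 'X_[cols b O j].

Record abm_state := ABMState {
  st_O : seq term; st_G : seq poly; st_d : nat; st_L : seq term }.

Definition abm_init : abm_state := ABMState [:: 0%MM] [::] 0 [::].

Inductive abm_step (X : seq point) (eps : R) (le : rel term) :
    abm_state -> abm_state -> Prop :=
  | step_next_degree s :
      st_L s = [::] -> border_deg (st_O s) (st_d s).+1 != [::] ->
      abm_step X eps le s
        (ABMState (st_O s) (st_G s) (st_d s).+1 (border_deg (st_O s) (st_d s).+1))
  | step_add_G s b lam v :
      sigma_min le (st_L s) b -> S2_result X b (st_O s) lam v ->
      Num.sqrt lam <= eps ->
      abm_step X eps le s
        (ABMState (st_O s) (rcons (st_G s) (S3_poly b (st_O s) v)) (st_d s) (rem b (st_L s)))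
  | step_add_O s b lam v :
      sigma_min le (st_L s) b -> S2_result X b (st_O s) lam v ->
      eps < Num.sqrt lam ->
      abm_step X eps le s
        (ABMState (rcons (st_O s) b) (st_G s) (st_d s) (rem b (st_L s))).

Inductive abm_reach (X : seq point) (eps : R) (le : rel term) : abm_state -> Prop :=
  | reach_init : abm_reach X eps le abm_init
  | reach_step s s' : abm_reach X eps le s -> abm_step X eps le s s' ->
                      abm_reach X eps le s'.

End ABM.

(* Main.v *)
Require Import Defs.
From HB Require Import structures.
From mathcomp Require Import all_boot all_order all_algebra.
From mathcomp Require Import reals.
From mathcomp Require Import mpoly.
From mathcomp Require Import ring lra zify.
From mathcomp Require Import boolp classical_sets topology normedtype derive.
Import Order.TTheory GRing.Theory Num.Theory.
Import numFieldTopology.Exports numFieldNormedType.Exports.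
Local Open Scope ring_scope.

Section Alg.
Context {R : realFieldType}.

Definition qf {m} (K : 'M[R]_m) (v : 'cV[R]_m) : R := (v^T *m K *m v) 0 0.

Lemma sqnormE N (x : 'cV[R]_N) : (x^T *m x) 0 0 = \sum_i x i 0 ^+ 2.
Proof. by rewrite mxE; apply: eq_bigr => i _; rewrite mxE expr2. Qed.

Lemma sqnorm_ge0 N (x : 'cV[R]_N) : 0 <= (x^T *m x) 0 0.
Proof. by rewrite sqnormE; apply: sumr_ge0 => i _; apply: sqr_ge0. Qed.

Lemma sqnorm_eq0 N (x : 'cV[R]_N) : (x^T *m x) 0 0 = 0 -> x = 0.
Proof.
rewrite sqnormE => /eqP; rewrite psumr_eq0 => [/allP H|i _]; last exact: sqr_ge0.
apply/matrixP => i j; rewrite ord1 mxE.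
by have /implyP := H i (mem_index_enum _); rewrite sqrf_eq0 => /(_ isT)/eqP.
Qed.

Lemma mxrow_eq0 p q (X : 'M[R]_(p, q)) : X *m X^T = 0 -> X = 0.
Proof.
move=> H; apply/matrixP => i j; rewrite mxE.
have := congr1 (fun M : 'M[R]_p => M i i) H; rewrite !mxE => /eqP.
under eq_bigr do rewrite mxE.
rewrite psumr_eq0 => [/allP Hs|k _]; last by rewrite -expr2 sqr_ge0.
by have /implyP := Hs j (mem_index_enum _); rewrite -expr2 sqrf_eq0 => /(_ isT)/eqP.
Qed.

Lemma qf_trE m (K : 'M[R]_m) (v w : 'cV[R]_m) : K^T = K ->
  (v^T *m K *m w) 0 0 = (w^T *m K *m v) 0 0.
Proof.
move=> sK; have -> : w^T *m K *m v = (v^T *m K *m w)^T.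
  by rewrite !trmx_mul trmxK sK mulmxA.
by rewrite [RHS]mxE.
Qed.

Lemma qf_expand m (K : 'M[R]_m) (v z : 'cV[R]_m) t : K^T = K ->
  qf K (v + t *: z) = qf K v + 2 * t * (z^T *m K *m v) 0 0 + t ^+ 2 * qf K z.
Proof.
move=> sK; rewrite /qf [(v + _)^T]linearD /= [(_ *: z)^T]linearZ /= !mulmxDl !mulmxDr.
rewrite -!scalemxAl -!scalemxAr.
have e := @qf_trE _ K v z sK.
move: e; set a := v^T *m K *m v; set b := v^T *m K *m z; set c := z^T *m K *m v; set d := z^T *m K *m z.
rewrite !mxE => ->; ring.
Qed.

Lemma psd_ker m (K : 'M[R]_m) (v : 'cV[R]_m) : K^T = K -> (forall w, 0 <= qf K w) ->
  qf K v = 0 -> K *m v = 0.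
Proof.
move=> sK psd qv; set z := K *m v.
have ha : (z^T *m K *m v) 0 0 = (z^T *m z) 0 0 by rewrite -mulmxA.
have c0 := psd z.
have := psd (v + (- (z^T *m z) 0 0 / (qf K z + 1)) *: z).
rewrite qf_expand // qv ha.
move: c0; set c : R := qf K z; set a : R := (z^T *m z) 0 0 => c0 H.
have a0 : a = 0.
  have hc1 : 0 < c + 1 by lra.
  have hh : a ^+ 2 * (- c - 2) / (c + 1) ^+ 2 =
      0 + 2 * (- a / (c + 1)) * a + (- a / (c + 1)) ^+ 2 * c.
    by field; rewrite gt_eqF.
  rewrite -hh in H.
  have : 0 <= a ^+ 2 * (- c - 2).
    by move: H; rewrite pmulr_lge0 // invr_gt0 exprn_gt0.
  nra.
by apply: sqnorm_eq0.
Qed.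


Lemma qfZ m (K : 'M[R]_m) a v : qf K (a *: v) = a ^+ 2 * qf K v.
Proof. by rewrite /qf linearZ /= [(a *: v)^T]linearZ /= -!scalemxAl scalerA !mxE expr2. Qed.

Lemma qfB_sum m (r : 'rV[R]_m) v :
  qf (diag_mx r *m diag_mx r) v = \sum_i (r 0 i * v i 0) ^+ 2.
Proof.
rewrite /qf mulmx_diag -mulmxA mul_diag_mx mxE; apply: eq_bigr => i _.
by rewrite !mxE; ring.
Qed.

Lemma qfB_ge0 m (r : 'rV[R]_m) v : 0 <= qf (diag_mx r *m diag_mx r) v.
Proof. by rewrite qfB_sum; apply: sumr_ge0 => i _; apply: sqr_ge0. Qed.

Lemma qfA_ge0 N m (M : 'M[R]_(N, m)) v : 0 <= qf (M^T *m M) v.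
Proof. by rewrite /qf (_ : v^T *m (M^T *m M) *m v = (M *m v)^T *m (M *m v)) ?sqnorm_ge0 // trmx_mul !mulmxA. Qed.

Section Red.
Variables (N m : nat) (M : 'M[R]_(N, m)) (r : 'rV[R]_m).
Let A := M^T *m M.
Let D := diag_mx r.
Let B := D *m D.
Let E : 'M[R]_m := diag_mx (\row_i ((r 0 i == 0)%:R)).
Let P : 'M[R]_m := 1%:M - E.
Let F := M *m E.
Let G := F^T *m F.
Let Lm := - (E *m (pinvmx G)^T *m F^T *m M).
Definition Phi := P + Lm *m P.

Lemma trE : E^T = E. Proof. exact: tr_diag_mx. Qed.
Lemma EE : E *m E = E.
Proof.
rewrite /E mulmx_diag; congr diag_mx; apply/rowP => i; rewrite !mxE.
by case: (r 0 i == 0); rewrite ?mulr1 ?mulr0.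
Qed.
Lemma BE : B *m E = 0.
Proof.
rewrite /B /D /E !mulmx_diag; apply/matrixP => i j; rewrite !mxE.
case: (i == j); rewrite ?mulr0n ?mulr1n //.
by case: eqP => [->|_]; rewrite ?mulr0 ?mul0r ?mulr1.
Qed.
Lemma trB : B^T = B. Proof. by rewrite /B trmx_mul /D tr_diag_mx. Qed.
Lemma trG : G^T = G. Proof. by rewrite /G trmx_mul trmxK. Qed.
Lemma GE : G *m E = G.
Proof. by rewrite /G /F -!mulmxA EE. Qed.
Lemma ELm : E *m Lm = Lm.
Proof. by rewrite /Lm mulmxN !mulmxA EE. Qed.
Lemma MLm : M *m Lm = F *m Lm.
Proof. by rewrite /F -mulmxA ELm. Qed.

Lemma FsubG : (F <= G)%MS.
Proof.
have sGF : (G <= F)%MS by apply: submxMl.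
rewrite -(mxrank_leqif_sup sGF).2 eqn_leq mxrankS //=.
set K0 := kermx G.
have K0G : K0 *m G = 0 by apply: mulmx_ker.
have KF : K0 *m F^T = 0.
  apply: mxrow_eq0; rewrite [(K0 *m _)^T]trmx_mul trmxK mulmxA -(mulmxA K0) -/G K0G mul0mx //.
have : (K0 <= kermx F^T)%MS by rewrite sub_kermx KF.
move/mxrankS; rewrite !mxrank_ker mxrank_tr.
have := rank_leq_col F; have := rank_leq_col G.
lia.
Qed.

Lemma GLm : G *m Lm = - (F^T *m M).
Proof.
rewrite /Lm mulmxN !mulmxA GE; congr (- _).
have h : G *m (pinvmx G)^T *m F^T = F^T.
  rewrite -[F^T in RHS](congr1 trmx (mulmxKpV FsubG)).
  rewrite [(_ *m G)^T]trmx_mul [(F *m _)^T]trmx_mul trG mulmxA //.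
by rewrite h.
Qed.

Lemma BPhi : B *m Phi = B.
Proof.
rewrite /Phi /P mulmxDr !mulmxBr !mulmxA mulmx1 BE subr0.
by rewrite -ELm mulmxA BE !mul0mx subrr addr0.
Qed.

Lemma PhiP : Phi *m P = Phi.
Proof.
have PP : P *m P = P by rewrite /P mulmxBr mulmx1 !mulmxBl mul1mx EE subrr subr0.
by rewrite /Phi mulmxDl -mulmxA PP.
Qed.

Lemma qfB_Phi v : qf B (Phi *m v) = qf B v.
Proof.
have h : Phi^T *m B *m Phi = B.
  by rewrite -mulmxA BPhi -[in LHS]trB -trmx_mul BPhi trB.
have h2 : v^T *m Phi^T *m B *m Phi = v^T *m B by rewrite -[in RHS]h !mulmxA.
by rewrite /qf [(Phi *m v)^T]trmx_mul (mulmxA _ Phi v) h2.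
Qed.

Lemma BP : B *m P = B.
Proof. by rewrite /P mulmxBr mulmx1 BE subr0. Qed.

Lemma qfB_P w : qf B (P *m w) = qf B w.
Proof.
have h : P^T *m B *m P = B.
  by rewrite -mulmxA BP /P linearB /= trmx1 trE mulmxBl mul1mx -[E]trE -trB -trmx_mul BE trmx0 subr0.
have h2 : w^T *m P^T *m B *m P = w^T *m B by rewrite -[in RHS]h !mulmxA.
by rewrite /qf [(P *m w)^T]trmx_mul (mulmxA _ P w) h2.
Qed.

Lemma Pentry (w : 'cV[R]_m) i : (P *m w) i 0 = if r 0 i == 0 then 0 else w i 0.
Proof.
rewrite /P mulmxBl mul1mx /E mul_diag_mx !mxE.
by case: (r 0 i == 0); rewrite ?mul1r ?subrr ?mul0r ?subr0.
Qed.

Lemma qfAE w : qf A w = ((M *m w)^T *m (M *m w)) 0 0.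
Proof. by rewrite /qf /A trmx_mul !mulmxA. Qed.

Lemma qfA_Phi v : qf A (Phi *m v) <= qf A v.
Proof.
set p := P *m v.
have Phiv : Phi *m v = p + Lm *m p by rewrite /Phi mulmxDl -mulmxA.
set r0 := M *m p + F *m (Lm *m p).
have Fr0 : F^T *m r0 = 0.
  by rewrite /r0 mulmxDr (mulmxA F^T F) -/G (mulmxA G) GLm mulNmx mulmxA subrr.
have MPhi : M *m (Phi *m v) = r0 by rewrite Phiv mulmxDr (mulmxA M Lm) MLm -mulmxA.
set y := v - Lm *m p.
have Mv : M *m v = r0 + F *m y.
  rewrite /r0 /y mulmxBr [F *m v - _]addrC addrA addrK /F -(mulmxA M E) -mulmxDr; congr (M *m _).
  by rewrite /p /P mulmxBl mul1mx subrK.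
clearbody r0 y; rewrite !qfAE MPhi Mv [(r0 + _)^T]linearD /= mulmxDl !mulmxDr.
have h1 : r0^T *m (F *m y) = 0.
  have key : r0^T *m F = (F^T *m r0)^T by rewrite [(F^T *m r0)^T]trmx_mul trmxK.
  by rewrite mulmxA key Fr0 trmx0 mul0mx.
have h2 : (F *m y)^T *m r0 = 0 by rewrite trmx_mul -mulmxA Fr0 mulmx0.
rewrite h1 h2 add0r addr0 [X in _ <= X]mxE lerDl.
exact: sqnorm_ge0.
Qed.
End Red.
End Alg.


Section An.
Local Open Scope classical_set_scope.
Lemma boxb (R : realFieldType) (a b : R) : a != 0 -> (a * b) ^+ 2 <= 1 ->
  - `|a|^-1 <= b <= `|a|^-1.
Proof.
move=> a0 h; rewrite -ler_norml.
have t0 : 0 < `|a| by rewrite normr_gt0.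
rewrite -(ler_pM2l t0) mulfV ?gt_eqF //.
rewrite -normrM -(expr_le1 (n:=2)) // ?normr_ge0 // real_normK ?num_real //.
Qed.

Variable R : realType.

Lemma cont_sum (T : topologicalType) (I : Type) (s : seq I) (P : pred I) (f : I -> T -> R) :
  (forall i, continuous (f i)) -> continuous (fun x => \sum_(i <- s | P i) f i x).
Proof.
move=> fc; elim: s => [|a s IH].
  have -> : (fun x => \sum_(i <- [::] | P i) f i x) = fun=> 0 by apply/funext => x; rewrite big_nil.
  by apply: cst_continuous.
case: (boolP (P a)) => Pa.
  have -> : (fun x => \sum_(i <- a :: s | P i) f i x) = (fun x => f a x + \sum_(i <- s | P i) f i x).
    by apply/funext => x; rewrite big_cons Pa.
  move=> x; exact: (@continuousD _ _ _ (f a) (fun x => \sum_(i <- s | P i) f i x) x (fc a x) (IH x)).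
have -> : (fun x => \sum_(i <- a :: s | P i) f i x) = (fun x => \sum_(i <- s | P i) f i x).
  by apply/funext => x; rewrite big_cons (negbTE Pa).
exact: IH.
Qed.

Lemma contM (T : topologicalType) (f g : T -> R) :
  continuous f -> continuous g -> continuous (fun x => f x * g x).
Proof. move=> cf cg x; exact: (@continuousM _ _ f g x (cf x) (cg x)). Qed.

Lemma qf_cont m (K : 'M[R]_m) : continuous (fun x : 'rV[R]_m => qf K x^T).
Proof.
have E x : qf K x^T = \sum_j (\sum_i x 0 i * K i j) * x 0 j.
  by rewrite /qf trmxK !mxE; under eq_bigr => j _ do rewrite !mxE.
have -> : (fun x : 'rV[R]_m => qf K x^T) = (fun x => \sum_j (\sum_i x 0 i * K i j) * x 0 j).
  by apply/funext => x; rewrite E.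
apply: cont_sum => j; apply: contM; last exact: (@coord_continuous R 1 m 0 j).
apply: cont_sum => i; apply: contM; last exact: cst_continuous.
exact: (@coord_continuous R 1 m 0 i).
Qed.
Lemma exists_min N m (M : 'M[R]_(N, m)) (r : 'rV[R]_m) (u : 'cV[R]_m) :
  qf (diag_mx r *m diag_mx r) u = 1 ->
  exists v, qf (diag_mx r *m diag_mx r) v = 1 /\
    forall w, qf (diag_mx r *m diag_mx r) w = 1 ->
      qf (M^T *m M) v <= qf (M^T *m M) w.
Proof.
move=> hu.
set B := diag_mx r *m diag_mx r.
set A := M^T *m M.
set Pm : 'M[R]_m := (1%:M - diag_mx (\row_i ((r 0 i == 0)%:R))).
set Ph := Phi _ _ M r.
pose c i : R := if r 0 i == 0 then 0 else `|r 0 i|^-1.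
pose Box := [set x : 'rV[R]_m | forall i, `[- c i, c i]%classic (x ord0 i)].
pose S := [set x : 'rV[R]_m | qf B x^T = 1].
have cBox : compact Box.
  by apply: (@rV_compact _ _ (fun i => `[- c i, c i]%classic)) => i; apply: segment_compact.
have clS : closed S.
  have -> : S = (fun x : 'rV[R]_m => qf B x^T) @^-1` [set y | y = 1] by [].
  by apply: preimage_closed; [move=> x _; exact: qf_cont | exact: closed_eq].
have cT : compact (Box `&` S) := compact_closedI cBox clS.
have PT w : qf B w = 1 -> (Box `&` S) (Pm *m w)^T.
  move=> hw; split; last by rewrite /S /= trmxK qfB_P.
  move=> i /=; rewrite in_itv /= mxE Pentry /c.
  case: eqP => [_|/eqP ri0]; first by rewrite oppr0 lexx.
  have h1 : (r 0 i * w i 0) ^+ 2 <= 1.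
    rewrite -hw qfB_sum (bigD1 i) //= lerDl.
    by apply: sumr_ge0 => k _; apply: sqr_ge0.
  exact: boxb.
have ne : (Box `&` S) !=set0 by exists (Pm *m u)^T; apply: PT.
have fE : (fun x : 'rV[R]_m => qf A (Ph *m x^T)) = (fun x => qf (Ph^T *m A *m Ph) x^T).
  apply/funext => x; rewrite /qf trmx_mul !mulmxA.
  done.
have fc : {within Box `&` S, continuous (fun x : 'rV[R]_m => qf A (Ph *m x^T))}.
  by apply: continuous_subspaceT; rewrite fE; exact: qf_cont.
have [x0 Tx0 minx] := EVT_min_rV ne cT fc.
exists (Ph *m x0^T); split.
  by rewrite qfB_Phi; rewrite inE in Tx0; case: Tx0.
move=> w hw.
have := minx ((Pm *m w)^T) (mem_set (PT w hw)).
rewrite /= trmxK mulmxA PhiP => h.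
exact: le_trans h (qfA_Phi _ _ M r w).
Qed.

Lemma core N m (M : 'M[R]_(N, m)) (r : 'rV[R]_m) (lam : R) :
  (forall mu (w : 'cV[R]_m),
     (M^T *m M) *m w = mu *: ((diag_mx r *m diag_mx r) *m w) /\
     w^T *m (diag_mx r *m diag_mx r) *m w = 1%:M -> lam <= mu) ->
  forall u, qf (diag_mx r *m diag_mx r) u = 1 -> lam <= qf (M^T *m M) u.
Proof.
move=> hmin u hu.
have [v [hv vmin]] := exists_min _ _ M r u hu.
set B := diag_mx r *m diag_mx r in hv vmin hmin *.
set A := M^T *m M in vmin hmin *.
set l := qf A v.
set C := A - l *: B.
have sC : C^T = C.
  rewrite /C linearB /= linearZ /= /A /B !trmx_mul trmxK tr_diag_mx //.
have qfC w : qf C w = qf A w - l * qf B w.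
  by rewrite /qf /C mulmxBr mulmxBl -scalemxAr -scalemxAl !mxE.
have psd w : 0 <= qf C w.
  rewrite qfC; have := qfB_ge0 _ r w; rewrite le_eqVlt => /orP [/eqP h0|hp].
    by rewrite -/B -h0 mulr0 subr0; apply: qfA_ge0.
  move: hp; rewrite -/B; set be := qf B w => hp.
  have be0 : 0 <= be by apply: ltW.
  have hw' : qf B ((Num.sqrt be)^-1 *: w) = 1.
    by rewrite qfZ exprVn sqr_sqrtr // mulVf // gt_eqF.
  have := vmin _ hw'; rewrite qfZ exprVn sqr_sqrtr // => h.
  have e : be^-1 * be = 1 by rewrite mulVf ?gt_eqF.
  rewrite subr_ge0.
  have h2 : l * be <= be^-1 * qf A w * be by rewrite ler_pM2r.
  by rewrite mulrAC e mul1r in h2.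
have qC0 : qf C v = 0 by rewrite qfC hv mulr1 subrr.
have Cv := psd_ker _ C v sC psd qC0.
have eig : A *m v = l *: (B *m v).
  by apply/eqP; rewrite -subr_eq0 scalemxAl -mulmxBl; apply/eqP.
have norm1 : v^T *m B *m v = 1%:M.
  by apply/matrixP => i j; rewrite !ord1 [RHS]mxE /= -hv.
exact: le_trans (hmin l v (conj eig norm1)) (vmin u hu).
Qed.

End An.

Section P.
Variables (R : realType) (n : nat) (X : seq 'rV[R]_n).
Local Notation term := 'X_{1..n}.
Local Notation poly := {mpoly R[n]}.

Lemma sum_seq_ord (s : seq term) (F : term -> R) :
  \sum_(t <- s) F t = \sum_(j < size s) F (nth 0%MM s j).
Proof. by rewrite (big_nth 0%MM) big_mkord. Qed.

Lemma sum_seq_ordP (s : seq term) (F : term -> poly) :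
  \sum_(t <- s) F t = \sum_(j < size s) F (nth 0%MM s j).
Proof. by rewrite (big_nth 0%MM) big_mkord. Qed.

Lemma coef_span (s : seq term) (c : term -> R) m : uniq s ->
  (\sum_(t <- s) c t *: ('X_[t] : poly))@_m = if m \in s then c m else 0.
Proof.
move=> us; rewrite raddf_sum /=.
under eq_bigr do rewrite mcoeffZ mcoeffX.
case: ifP => ms.
  rewrite (bigD1_seq m) //= eqxx mulr1 big1 ?addr0 // => t /negbTE ->.
  by rewrite mulr0.
rewrite big1_seq // => t /andP [_ ts]; case: eqP => [e|_]; last by rewrite mulr0.
by rewrite -e ts in ms.
Qed.

Lemma sum_sub (s1 s2 : seq term) (F : term -> R) : uniq s1 -> uniq s2 ->
  {subset s1 <= s2} -> (forall x, x \in s2 -> x \notin s1 -> F x = 0) ->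
  \sum_(t <- s1) F t = \sum_(t <- s2) F t.
Proof.
move=> u1 u2 sub F0.
rewrite [RHS](bigID (fun t => t \in s1)) /= [X in _ + X]big1_seq ?addr0; last first.
  by move=> t /andP [nt ts]; apply: F0.
rewrite -[RHS]big_filter; apply: perm_big; apply: uniq_perm => //.
  exact: filter_uniq.
by move=> t; rewrite mem_filter; case: (boolP (t \in s1)) => // /sub ->.
Qed.

Lemma grad_norm_ge0 (g : poly) : 0 <= grad_norm X g.
Proof.
rewrite /grad_norm; case: ifP => // _.
by apply: divr_ge0; apply: sqrtr_ge0.
Qed.

Lemma gw_mono t : gw_norm X ('X_[t] : poly) = grad_norm X 'X_[t].
Proof.
rewrite /gw_norm msuppX big_seq1 mcoeffX eqxx expr1n mul1r sqrtr_sqr.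
by rewrite ger0_norm // grad_norm_ge0.
Qed.

Lemma gw_span (s : seq term) (c : term -> R) : uniq s ->
  gw_norm X (\sum_(t <- s) c t *: ('X_[t] : poly)) =
  Num.sqrt (\sum_(t <- s) c t ^+ 2 * grad_norm X 'X_[t] ^+ 2).
Proof.
move=> us; rewrite /gw_norm; congr Num.sqrt.
set g := \sum_(t <- s) _.
rewrite (@sum_sub (msupp g) s) //.
- by apply: eq_big_seq => t ts; rewrite coef_span // ts.
- move=> m; rewrite mcoeff_msupp coef_span //; case: ifP => //.
  by rewrite eqxx.
- by move=> m ms; rewrite mcoeff_msupp negbK coef_span // ms => /eqP ->; rewrite expr0n mul0r.
Qed.

Lemma S3_seq b (O : seq term) (w : 'cV[R]_((size O).+1)) : uniq (b :: O) ->
  S3_poly b O w = \sum_(t <- b :: O) (w (inord (index t (b :: O))) 0) *: ('X_[t] : poly).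
Proof.
move=> u; rewrite sum_seq_ordP /S3_poly; apply: eq_bigr => j _.
by rewrite index_uniq // inord_val.
Qed.

Lemma gw_S3 b (O : seq term) (w : 'cV[R]_((size O).+1)) : uniq (b :: O) ->
  gw_norm X (S3_poly b O w) = Num.sqrt (qf (Dmat X b O *m Dmat X b O) w).
Proof.
move=> u; rewrite S3_seq // gw_span // sum_seq_ord /Dmat qfB_sum; congr Num.sqrt.
apply: eq_bigr => j _; rewrite index_uniq // inord_val !mxE gw_mono /cols.
by rewrite exprMn mulrC.
Qed.

Lemma eucl_S3 b (O : seq term) (w : 'cV[R]_((size O).+1)) :
  eucl_norm (evalX X (S3_poly b O w)) =
  Num.sqrt (qf ((Mmat X b O)^T *m Mmat X b O) w).
Proof.
rewrite /eucl_norm /evalX big_map qfAE sqnormE; congr Num.sqrt.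
rewrite (big_nth 0) big_mkord; apply: eq_bigr => i _; rewrite !mxE; congr (_ ^+ 2).
rewrite /S3_poly raddf_sum /=; apply: eq_bigr => j _.
by rewrite mevalZ !mxE mulrC.
Qed.

End P.

Section Main.
Variables (R : realType) (n : nat) (X : seq 'rV[R]_n) (eps : R) (sigma : rel 'X_{1..n}).
Local Notation term := 'X_{1..n}.
Local Notation poly := {mpoly R[n]}.

Definition P1 (s : @abm_state R n) := forall h : poly, in_span (st_O s) h ->
  gw_norm X h = 1 -> ~ approx_vanishing X eps h.

Definition Inv (s : @abm_state R n) := [/\ uniq (st_O s), uniq (st_L s),
  (forall t, t \in st_L s -> t \notin st_O s) & P1 s].

Lemma qf_eig b (O : seq term) lam v : gen_eigpair X b O lam v ->
  qf (Dmat X b O *m Dmat X b O) v = 1 /\ qf ((Mmat X b O)^T *m Mmat X b O) v = lam.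
Proof.
move=> [eq n1]; split; first by rewrite /qf n1 mxE.
by rewrite /qf -mulmxA eq -scalemxAr mxE mulmxA n1 mxE mulr1.
Qed.

Lemma P1_init : P1 abm_init.
Proof.
move=> h [c ->] /=; rewrite gw_span //.
rewrite big_seq1.
have -> : grad_norm X ('X_[0%MM] : poly) = 0.
  rewrite /grad_norm big1 ?eqxx // => k _.
  by rewrite /degk msuppX big_seq1 mnm0E.
by rewrite expr0n /= mulr0 sqrtr0 => /eqP; rewrite eq_sym oner_eq0.
Qed.

Lemma P1_addO (O : seq term) (L : seq term) G d b lam v :
  uniq (b :: O) -> S2_result X b O lam v -> eps < Num.sqrt lam ->
  P1 (ABMState (rcons O b) G d L).
Proof.
move=> ub [eig hmin] hlt h [c ->] /=.
have hE : \sum_(t <- rcons O b) c t *: ('X_[t] : poly) =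
    S3_poly b O (\col_j c (cols b O j)).
  rewrite (perm_big (b :: O)); last by rewrite perm_rcons perm_refl.
  by rewrite sum_seq_ordP /S3_poly; apply: eq_bigr => j _; rewrite mxE.
rewrite hE; set w := \col_j _.
rewrite gw_S3 // => gw1.
have qB : qf (Dmat X b O *m Dmat X b O) w = 1.
  by rewrite -(sqr_sqrtr (qfB_ge0 _ _ w)) gw1 expr1n.
have := @core R _ _ (Mmat X b O) (\row_j gw_norm X ('X_[cols b O j] : poly)) lam hmin w qB.
rewrite /approx_vanishing eucl_S3 => hl happ.
have := ler_wsqrtr hl; lra.
Qed.

Lemma step_inv s s' : abm_step X eps sigma s s' -> Inv s -> Inv s'.
Proof.
case=> [s1 hL hne | s1 b lam v [bL _] hS hle | s1 b lam v [bL _] hS hlt];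
  case=> uO uL dis p1.
- split => //=; first exact: undup_uniq.
  by move=> t; rewrite mem_undup mem_filter => /andP [/andP [_ ->]].
- split => //=; first exact: rem_uniq.
  by move=> t /mem_rem; apply: dis.
- have bO := dis _ bL.
  split => /=.
  + by rewrite rcons_uniq bO uO.
  + exact: rem_uniq.
  + move=> t; rewrite mem_rem_uniq // => /andP [tb tL].
    by rewrite mem_rcons in_cons negb_or tb dis.
  + by apply: (@P1_addO _ _ _ _ _ _ _ _ hS hlt); rewrite /= bO uO.
Qed.

Lemma reach_inv s : abm_reach X eps sigma s -> Inv s.
Proof.
elim => [|s1 s2 _ IH st]; last exact: step_inv st IH.
by split => //=; exact: P1_init.
Qed.

End Main.

Theorem mainTheorem3 (R : realType) (n : nat) (X : seq 'rV[R]_n) (eps : R)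
    (sigma : rel 'X_{1..n}) :
  uniq X -> 0 <= eps -> term_order sigma -> degree_compatible sigma ->
  forall s : @abm_state R n, abm_reach X eps sigma s ->
    (forall h : {mpoly R[n]}, in_span (st_O s) h -> gw_norm X h = 1 ->
       ~ approx_vanishing X eps h) /\
    (forall (b : 'X_{1..n}) (lam : R) (v : 'cV[R]_((size (st_O s)).+1)),
       sigma_min sigma (st_L s) b -> S2_result X b (st_O s) lam v ->
       Num.sqrt lam <= eps ->
       [/\ gw_norm X (S3_poly b (st_O s) v) = 1,
           v ord0 ord0 != 0 &
           approx_vanishing X (Num.sqrt lam) (S3_poly b (st_O s) v)]).
Proof.
move=> _ _ _ _ s hs.
have [uO uL dis p1] := @reach_inv _ _ X eps sigma _ hs.
split; first exact: p1.
move=> b lam v [bL _] [eig hmin] hle.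
have ub : uniq (b :: st_O s) by rewrite /= uO andbT dis.
have [qB qA] := @qf_eig _ _ X _ _ _ _ eig.
have gw1 : gw_norm X (S3_poly b (st_O s) v) = 1 by rewrite gw_S3 // qB sqrtr1.
have app : approx_vanishing X (Num.sqrt lam) (S3_poly b (st_O s) v).
  by rewrite /approx_vanishing eucl_S3 qA.
split => //.
apply/negP => /eqP v0.
apply: (p1 (S3_poly b (st_O s) v)) => //; last exact: le_trans app hle.
exists (fun t => v (inord (index t (b :: st_O s))) 0).
rewrite S3_seq // big_cons /= eqxx.
have -> : (inord 0 : 'I_((size (st_O s)).+1)) = ord0 by apply: val_inj; rewrite /= inordK.
by rewrite v0 scale0r add0r.
Qed.
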